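(* Let $\overline{F}$ be a finite set, $r=(r(i,j):i,j\in\overline{F})$ an irreducible stochastic matrix, and $\boldsymbol{\alpha}=(\alpha_j:j\in\overline{F})\in[0,1]^{\overline{F}}$ a non-zero vector, and let $r^{(\boldsymbol{\alpha})}=(I-rI_{(1-\boldsymbol{\alpha})})^{-1}rI_{\boldsymbol{\alpha}}$. If a row vector $y$ satisfies $y\cdot r^{(\boldsymbol{\alpha})}=y$, then $x=y\,(I-rI_{(1-\boldsymbol{\alpha})})^{-1}$ satisfies $x\cdot r=x$, and $y=(\alpha_j x_j:j\in\overline{F})$.
   Context: $I_{\boldsymbol{\alpha}}$ and $I_{(1-\boldsymbol{\alpha})}$ are the diagonal matrices indexed by $\overline{F}$ with diagonal entries $\alpha_j$, resp. $1-\alpha_j$; $I$ is the identity matrix. Under the given assumptions $I-rI_{(1-\boldsymbol{\alpha})}$ is invertible, and $r^{(\boldsymbol{\alpha})}$ is the transition matrix of the Markov chain obtained from the chain with transition matrix $r$ by randomized skipping with acceptance probabilities $\boldsymbol{\alpha}$ (a proposed next state $j$, chosen with probability $r(i,j)$ from the current state $i$, is accepted with probability $\alpha_j$; if rejected, a new proposal is drawn from row $j$ of $r$ without time passing, and so on until acceptance). *)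

(* Defs.v *)
From mathcomp Require Import all_boot all_order all_algebra.
Set Implicit Arguments. Unset Strict Implicit. Unset Printing Implicit Defensive.
Import Order.TTheory GRing.Theory Num.Theory.
Local Open Scope ring_scope.

(* State space \overline{F} is represented by 'I_n. *)

Definition stochastic (R : numDomainType) (n : nat) (r : 'M[R]_n) : Prop :=
  (forall i j, 0 <= r i j) /\ (forall i, \sum_(j < n) r i j = 1).

Definition irreducible_mx (R : numDomainType) (n : nat) (r : 'M[R]_n) : Prop :=
  forall i j : 'I_n, exists k : nat, 0 < (r ^+ k) i j.

Definition Ialpha (R : ringType) (n : nat) (alpha : 'I_n -> R) : 'M[R]_n :=
  diag_mx (\row_j alpha j).

Definition I1malpha (R : ringType) (n : nat) (alpha : 'I_n -> R) : 'M[R]_n :=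
  diag_mx (\row_j (1 - alpha j)).

Definition r_alpha (R : fieldType) (n : nat) (r : 'M[R]_n) (alpha : 'I_n -> R)
  : 'M[R]_n :=
  invmx (1%:M - r *m I1malpha alpha) *m (r *m Ialpha alpha).

(* Main.v *)
Require Import Defs.
From mathcomp Require Import all_boot all_order all_algebra.
From mathcomp Require Import lra.
Import Order.TTheory GRing.Theory Num.Theory.
Local Open Scope ring_scope.

Lemma inv_lemma (R : realFieldType) (n : nat) (r : 'M[R]_n)
  (alpha : 'I_n -> R) :
  stochastic r -> irreducible_mx r ->
  (forall j, 0 <= alpha j <= 1) -> (exists j, alpha j != 0) ->
  (1%:M - r *m I1malpha alpha) \in unitmx.
Proof.
move=> [r0 r1] irr a01 [js ajs].
rewrite unitmxE unitfE -det_tr; apply/negP => /det0P [v vnz hv].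
have hv' : forall i, v 0 i = \sum_j r i j * (1 - alpha j) * v 0 j.
  move: hv; rewrite linearB /= trmx1 mulmxBr mulmx1 => /eqP; rewrite subr_eq0 => /eqP hv i.
  rewrite {1}hv /I1malpha mul_mx_diag !mxE; apply: eq_bigr => j _; rewrite !mxE.
  by rewrite mulrC.
pose i0 := [arg max_(i > js) `|v 0 i|]%O.
have hmax : forall i, `|v 0 i| <= `|v 0 i0|.
  by move=> i; rewrite /i0; case: arg_maxP => // k _ H; apply: H.
set m := `|v 0 i0| in hmax.
have mpos : 0 < m.
  rewrite lt_def normr_ge0 andbT; apply/negP => /eqP m0; apply/negP: vnz; apply/negPn.
  apply/eqP/rowP => j; rewrite mxE; apply/eqP; rewrite -normr_eq0 eq_le normr_ge0 andbT.
  by rewrite -m0.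
pose P j := (1 - alpha j) * `|v 0 j| = m.
have Pm : forall j, P j -> `|v 0 j| = m.
  move=> j Pj; have := hmax j; have := a01 j; move: Pj; rewrite /P.
  have := normr_ge0 (v 0 j); move=> h1 h2 /andP[h3 h4] h5; nra.
have Pa : forall j, P j -> alpha j = 0.
  move=> j Pj; have := hmax j; have := a01 j; move: Pj; rewrite /P.
  have := normr_ge0 (v 0 j); move=> h1 h2 /andP[h3 h4] h5.
  apply/eqP; rewrite eq_le h3 andbT; nra.
have key : forall i, `|v 0 i| = m -> forall j, r i j != 0 -> P j.
  move=> i vi j rij.
  have le1 : m <= \sum_j r i j * ((1 - alpha j) * `|v 0 j|).
    rewrite -vi hv'; apply: le_trans (ler_norm_sum _ _ _) _; apply: ler_sum => k _.
    rewrite !normrM (ger0_norm (r0 i k)) ger0_norm ?mulrA //.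
    by have := a01 k; move=> /andP[_ h]; rewrite subr_ge0.
  have hs : \sum_k r i k * (m - (1 - alpha k) * `|v 0 k|) = 0.
    apply/eqP; rewrite eq_le; apply/andP; split.
      under eq_bigr => k _ do rewrite mulrBr.
      by rewrite sumrB -mulr_suml r1 mul1r subr_le0.
    apply: sumr_ge0 => k _; apply: mulr_ge0 => //.
    have := hmax k; have := a01 k; have := normr_ge0 (v 0 k).
    move=> h1 /andP[h2 h3] h4; nra.
  have hge : (forall k, xpredT k -> 0 <= r i k * (m - (1 - alpha k) * `|v 0 k|)).
    move=> k _; apply: mulr_ge0 => //.
    have := hmax k; have := a01 k; have := normr_ge0 (v 0 k).
    move=> h1 /andP[h2 h3] h4; nra.
  have := @psumr_eq0P _ _ xpredT _ hge hs j isT.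
  move=> /eqP; rewrite mulf_eq0 (negbTE rij) /= subr_eq0 => /eqP.
  by rewrite /P => <-.
have clos : forall k l j, P l -> (r ^+ k) l j != 0 -> P j.
  elim=> [|k IH] l j Pl.
    rewrite expr0 mxE; case: (l =P j) => [<- //|_]; by rewrite eqxx.
  rewrite exprSr -mulmxE mxE => hs.
  have [l' /andP[h1 h2]] : exists l', ((r ^+ k) l l' != 0) && (r l' j != 0).
    apply/existsP; apply: contraR hs; rewrite negb_exists => /forallP H.
    apply/eqP; apply: big1 => l' _; have := H l'; rewrite negb_and !negbK.
    by case/orP => /eqP ->; rewrite ?mul0r ?mulr0.
  exact: (key l' (Pm _ (IH _ _ Pl h1)) _ h2).
have [l hl] : exists l, r i0 l != 0.
  apply/existsP; apply: contraT; rewrite negb_exists => /forallP H.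
  have := r1 i0; rewrite big1 => [/eqP|l _]; first by rewrite eq_sym oner_eq0.
  by have := H l; rewrite negbK => /eqP.
have Pl := key i0 erefl l hl.
have [k hk] := irr l js.
have := Pa _ (clos k l js Pl (lt0r_neq0 hk)).
by move/eqP; rewrite (negbTE ajs).
Qed.

Theorem proposition2p5 (R : realFieldType) (n : nat) (r : 'M[R]_n)
  (alpha : 'I_n -> R) (y : 'rV[R]_n) :
  stochastic r -> irreducible_mx r ->
  (forall j, 0 <= alpha j <= 1) -> (exists j, alpha j != 0) ->
  y *m r_alpha r alpha = y ->
  let x := y *m invmx (1%:M - r *m I1malpha alpha) in
  (1%:M - r *m I1malpha alpha) \in unitmx /\
  x *m r = x /\ (forall j, y 0 j = alpha j * x 0 j).
Proof.
move=> hs hi ha hne hy x.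
have U := @inv_lemma _ _ _ _ hs hi ha hne.
have xM : x *m (1%:M - r *m I1malpha alpha) = y by rewrite /x mulmxKV.
have xr : x *m r *m Ialpha alpha = y by rewrite -hy /r_alpha /x !mulmxA.
have hD : I1malpha alpha + Ialpha alpha = 1%:M.
  apply/matrixP => i j; rewrite !mxE; case: (i =P j) => [->|_].
    by rewrite !mulr1n subrK.
  by rewrite !mulr0n addr0.
have xr' : x *m r = x.
  move: xM; rewrite mulmxBr mulmx1 -xr mulmxA => /eqP; rewrite subr_eq => /eqP xe.
  by rewrite {2}xe -mulmxDr addrC hD mulmx1.
split=> //; split=> // j.
by rewrite -xr xr' /Ialpha mul_mx_diag !mxE mulrC.
Qed.
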